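(* Let $\mathbf{F}=(F_1,\ldots,F_d)$ be a vector of finite simple graphs, all with exactly $n$ vertices, and let $n'' \geq n' \geq n$ be integers. Then for every positive integer $k$, \[E_{P^L_{\mathbf{F};n''}}\left({ n' \choose n} k \right) \le E_{P^L_{\mathbf{F};n'}}\left({ n'' \choose n } k \right).\]
   Context: For graphs $F,G$, $t^L(F,G)$ is the number of subgraphs of $G$ (not necessarily induced) isomorphic to $F$; write $t^L(\mathbf{F},G)=(t^L(F_1,G),\ldots,t^L(F_d,G))$. The lattice polytope of subgraph statistics is $P^L_{\mathbf{F};N}=\mathrm{conv}\{t^L(\mathbf{F},G)\mid G\text{ a graph on } N \text{ vertices}\}\subseteq\mathbb{R}^d$. For a lattice polytope $P\subseteq\mathbb{R}^d$ and a positive integer $k$, $E_P(k)$ is the number of points of $\mathbb{Z}^d$ in $kP=\{kp\mid p\in P\}$ (the Ehrhart polynomial of $P$). *)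

(* Defs.v *)
From HB Require Import structures.
From mathcomp Require Import all_boot all_order all_algebra.
From mathcomp Require Import finmap boolp classical_sets cardinality reals.
Set Implicit Arguments. Unset Strict Implicit. Unset Printing Implicit Defensive.
Import Order.TTheory GRing.Theory Num.Theory.
Local Open Scope ring_scope.
Local Open Scope fset_scope.

(* A finite simple graph on vertex set 'I_N is given by its edge set:
   a set of 2-element subsets of 'I_N. *)
Definition simple_graph (N : nat) (E : {set {set 'I_N}}) : bool :=
  [forall e in E, #|e| == 2%N].

Definition is_subgraph (N : nat) (G : {set {set 'I_N}})
    (p : {set 'I_N} * {set {set 'I_N}}) : bool :=
  (p.2 \subset G) && [forall e in p.2, e \subset p.1].

Definition iso_to (n N : nat) (F : {set {set 'I_n}})
    (p : {set 'I_N} * {set {set 'I_N}}) : bool :=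
  [exists f : {ffun 'I_n -> 'I_N},
     [&& injectiveb f, f @: [set: 'I_n] == p.1 &
         p.2 == [set f @: e | e : {set 'I_n} in F]]].

(* t^L(F,G): number of (not necessarily induced) subgraphs of G isomorphic to F *)
Definition tL (n N : nat) (F : {set {set 'I_n}}) (G : {set {set 'I_N}}) : nat :=
  #|[set p : {set 'I_N} * {set {set 'I_N}} | is_subgraph G p && iso_to F p]|.

Definition tLvec (R : pzRingType) (d n N : nat) (F : 'I_d -> {set {set 'I_n}})
    (G : {set {set 'I_N}}) : 'rV[R]_d :=
  \row_i ((tL (F i) G)%:R : R).

(* x lies in k * P^L_{F;N}, where P^L_{F;N} is the convex hull of the t^L(F,G)
   over all (simple) graphs G on N vertices *)
Definition in_dilated_polytope (R : realType) (d n N k : nat)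
    (F : 'I_d -> {set {set 'I_n}}) (x : 'rV[R]_d) : Prop :=
  exists lam : {set {set 'I_N}} -> R,
    [/\ (forall G, 0 <= lam G),
        (forall G, ~~ simple_graph G -> lam G = 0),
        \sum_G lam G = 1 &
        x = k%:R *: \sum_G (lam G *: tLvec R F G)].

Definition ehrhart (R : realType) (d n N : nat) (F : 'I_d -> {set {set 'I_n}})
    (k : nat) : nat :=
  #|` fset_set [set z : 'rV[int]_d |
                  in_dilated_polytope N k F (map_mx (fun a : int => a%:~R : R) z)] |.

(* Main.v *)
Require Import Defs.
From HB Require Import structures.
From mathcomp Require Import all_boot all_order all_algebra.
From mathcomp Require Import ring.
Set Implicit Arguments. Unset Strict Implicit. Unset Printing Implicit Defensive.

Lemma supersets (T : finType) (V : {set T}) b : #|V| <= b ->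
  #|[set S : {set T} | V \subset S & #|S| == b]| = 'C(#|T| - #|V|, b - #|V|).
Proof.
move=> Vb.
have cV : #|~: V| = #|T| - #|V| by rewrite -(cardsC V) addKn.
rewrite -cV -cards_draws.
have -> : [set A : {set T} | A \subset ~: V & #|A| == b - #|V|] =
  (fun S => S :\: V) @: [set S : {set T} | V \subset S & #|S| == b].
  apply/setP => X; rewrite inE; apply/andP/imsetP.
  - move=> [XV /eqP cX]; exists (V :|: X); last first.
      apply/setP=> x; rewrite !inE; case xV: (x \in V) => //=.
      by move/subsetP: XV => /(_ x); rewrite !inE xV; case: (x \in X) => // /(_ isT).
    rewrite inE subsetUl /= -(eqn_add2r #|V :&: X|) cardsU.
    have -> : V :&: X = set0.
      apply/setP=> x; rewrite !inE; apply/negbTE/negP=> /andP[xV xX].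
      by move/subsetP: XV => /(_ x xX); rewrite inE xV.
    by rewrite cards0 subn0 cX (subnKC Vb).
  - move=> [S]; rewrite inE => /andP[VS /eqP cS] ->; split; first by apply/subsetP=> x; rewrite !inE => /andP[].
    by rewrite cardsD (setIidPr VS) cS.
rewrite card_in_imset // => S1 S2; rewrite !inE => /andP[V1 _] /andP[V2 _] E.
by rewrite -[S1](setID _ V) -[S2](setID _ V) (setIidPr V1) (setIidPr V2) E.
Qed.

Lemma binid N m a : a <= m -> m <= N ->
  'C(N, m) * 'C(m, a) = 'C(N, a) * 'C(N - a, m - a).
Proof.
move=> am mN.
apply/eqP; rewrite -(eqn_pmul2r (fact_gt0 a)) -(eqn_pmul2r (fact_gt0 (m - a))) -(eqn_pmul2r (fact_gt0 (N - m))).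
have h1 := bin_fact mN. have h2 := bin_fact am.
have aN : a <= N by apply: leq_trans mN.
have h3 := bin_fact aN.
have h4 : m - a <= N - a by apply: leq_sub2r.
have h5 := bin_fact h4.
have e : N - a - (m - a) = N - m by rewrite subnBA // subnK // (leq_trans am).
rewrite e in h5.
apply/eqP.
transitivity ('C(N, m) * (('C(m, a) * (a`! * (m - a)`!)) * (N - m)`!)); first by ring.
rewrite h2.
transitivity ('C(N, a) * (a`! * ('C(N - a, m - a) * ((m - a)`! * (N - m)`!)))); last by ring.
by rewrite h5 h3 h1.
Qed.

Lemma pullback_count n m N (F0 : {set {set 'I_n}}) (HF0 : simple_graph F0)
  (G : {set {set 'I_N}}) (g : 'I_m -> 'I_N) (ginj : injective g) :
  tL F0 [set e : {set 'I_m} | (#|e| == 2) && (g @: e \in G)] =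
  #|[set p | (is_subgraph G p && iso_to F0 p) && (p.1 \subset g @: setT)]|.
Proof.
set H := [set e : {set 'I_m} | _].
pose phi := fun q : {set 'I_m} * {set {set 'I_m}} =>
  (g @: q.1, [set g @: e | e : {set 'I_m} in q.2]).
have phi_inj : injective phi.
  move=> [a1 b1] [a2 b2] [/imset_inj E1 /imset_inj E2].
  by rewrite (E1 ginj) (E2 (imset_inj ginj)).
rewrite /tL -(card_imset _ phi_inj); apply: eq_card => p.
rewrite [in RHS]inE; apply/imsetP/idP.
- move=> [q]; rewrite inE => /andP[/andP[q2H q21] /existsP[f /and3P[finj /eqP f1 /eqP f2]]] ->.
  rewrite -andbA; apply/and3P; split; first (rewrite /is_subgraph; apply/andP; split).
  + apply/subsetP => x /imsetP[e eq2 ->].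
    by move/subsetP: q2H => /(_ e eq2); rewrite inE => /andP[].
  + apply/forallP => x; apply/implyP => /imsetP[e eq2 ->].
    by apply: imsetS; move/forallP: q21 => /(_ e) /implyP; apply.
  + apply/existsP; exists [ffun i => g (f i)]; apply/and3P; split.
    * apply/injectiveP => i j; rewrite !ffunE => /ginj; exact: (injectiveP _ finj).
    * rewrite /= -f1 -imset_comp; apply/eqP/eq_imset => i; by rewrite ffunE.
    * rewrite /= f2 -imset_comp; apply/eqP/eq_imset => e /=.
      rewrite -imset_comp; apply/eq_imset => i; by rewrite ffunE.
  + by rewrite /= imsetS // subsetT.
- move=> /andP[/andP[/andP[p2G p21] /existsP[f /and3P[finj /eqP f1 /eqP f2]]] p1S].
  have Hex : forall i, exists j, g j == f i.
    move=> i; have : f i \in g @: setT.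
      by move/subsetP: p1S; apply; rewrite -f1; apply: imset_f.
    by move/imsetP=> [j _ ->]; exists j.
  pose f' := fun i => xchoose (Hex i).
  have gf' : forall i, g (f' i) = f i by move=> i; apply/eqP/(xchooseP (Hex i)).
  have f'inj : injective f'.
    by move=> i j E; apply: (injectiveP _ finj); rewrite -!gf' E.
  exists (f' @: setT, [set f' @: e | e : {set 'I_n} in F0]).
    rewrite inE; apply/andP; split; first (apply/andP; split).
    + apply/subsetP => x /imsetP[e eF ->]; rewrite inE; apply/andP; split.
        by rewrite card_imset //; move/forallP: HF0 => /(_ e) /implyP; apply.
      rewrite -imset_comp (eq_imset _ gf') /=.
      by move/subsetP: p2G; apply; rewrite f2; apply: imset_f.
    + apply/forallP => x; apply/implyP => /imsetP[e eF ->] /=.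
      by apply: imsetS; apply: subsetT.
    + apply/existsP; exists [ffun i => f' i]; apply/and3P; split.
      * apply/injectiveP => i j; rewrite !ffunE; exact: f'inj.
      * by apply/eqP/eq_imset => i; rewrite ffunE.
      * apply/eqP/eq_imset => e /=; apply/eq_imset => i; by rewrite ffunE.
  rewrite /phi /=; case: p f1 f2 {p2G p21 p1S} => [p1 p2] /= f1 f2; congr (_, _).
    by rewrite -imset_comp -f1; apply: eq_imset => i /=; rewrite gf'.
  rewrite f2 -imset_comp; apply: eq_imset => e /=.
  by rewrite -imset_comp; apply: eq_imset => i /=; rewrite gf'.
Qed.

Lemma enum_inj (T : finType) (S : {set T}) m : #|S| = m ->
  exists2 g : 'I_m -> T, injective g & g @: setT = S.
Proof.
move=> <-; exists (@enum_val T (mem S)); first exact: enum_val_inj.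
apply/setP => x; apply/imsetP/idP.
- by move=> [i _ ->]; apply: enum_valP.
- by move=> xS; exists (enum_rank_in xS x); rewrite ?inE // enum_rankK_in.
Qed.

Lemma copy_card n N (F0 : {set {set 'I_n}}) (p : {set 'I_N} * {set {set 'I_N}}) :
  iso_to F0 p -> #|p.1| = n.
Proof.
move=> /existsP[f /and3P[finj /eqP f1 _]].
by rewrite -f1 card_imset ?cardsT ?card_ord //; apply/injectiveP.
Qed.

From mathcomp Require Import finmap boolp classical_sets cardinality reals.
Import Order.TTheory GRing.Theory Num.Theory.

Lemma key n n' N (Hn : n <= n') (Hn' : n' <= N) (G : {set {set 'I_N}}) :
  exists Hf : {set 'I_N} -> {set {set 'I_n'}},
   (forall S, simple_graph (Hf S)) /\
   forall F0 : {set {set 'I_n}}, simple_graph F0 ->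
     \sum_(S : {set 'I_N} | #|S| == n') tL F0 (Hf S) = 'C(N - n, n' - n) * tL F0 G.
Proof.
have : forall S : {set 'I_N}, exists H : {set {set 'I_n'}}, simple_graph H /\
   (#|S| = n' -> exists2 g : 'I_n' -> 'I_N, injective g & g @: [set: _] = S /\
       H = [set e : {set 'I_n'} | (#|e| == 2) && (g @: e \in G)]).
  move=> S; case: (boolP (#|S| == n')) => [/eqP cS | cS].
    have [g ginj gS] := enum_inj cS.
    exists [set e : {set 'I_n'} | (#|e| == 2) && (g @: e \in G)]; split.
      by apply/forallP => e; apply/implyP; rewrite inE => /andP[].
    by move=> _; exists g.
  exists finset.set0; split; first by apply/forallP => e; rewrite inE.
  by move=> E; rewrite E eqxx in cS.
move=> /choice [Hf HfP]; exists Hf; split; first by move=> S; case: (HfP S).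
move=> F0 HF0.
have -> : \sum_(S : {set 'I_N} | #|S| == n') tL F0 (Hf S) =
   \sum_(S : {set 'I_N} | #|S| == n') \sum_(p in [set p | is_subgraph G p && iso_to F0 p]) (p.1 \subset S : nat).
  apply: eq_bigr => S /eqP cS.
  have [_ /(_ cS) [g ginj [gS ->]]] := HfP S.
  rewrite pullback_count // gS.
  rewrite -sum1_card [LHS]big_mkcond [RHS]big_mkcond; apply: eq_bigr => p _; rewrite !inE.
  by case: (is_subgraph G p && iso_to F0 p); case: (p.1 \subset S).
rewrite exchange_big /=.
rewrite (eq_bigr (fun _ => 'C(N - n, n' - n))); last first.
  move=> p; rewrite inE => /andP[_ /copy_card cp].
  have -> : \sum_(S : {set 'I_N} | #|S| == n') (p.1 \subset S : nat) =
            #|[set S : {set 'I_N} | p.1 \subset S & #|S| == n']|.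
    rewrite -sum1_card [RHS]big_mkcond [LHS]big_mkcond; apply: eq_bigr => S _.
    by rewrite inE; case: (#|S| == n'); case: (p.1 \subset S).
  by rewrite supersets cp ?card_ord.
by rewrite sum_nat_const mulnC.
Qed.
Local Open Scope ring_scope.
Local Open Scope ring_scope.

Lemma coord_eq (R : realType) d n N K (F : 'I_d -> {set {set 'I_n}})
  (lam : {set {set 'I_N}} -> R) (x : 'rV[R]_d) :
  x = (K%:R *: \sum_G (lam G *: tLvec R F G))%R ->
  forall i j, x i j = (K%:R * \sum_G lam G * (tL (F j) G)%:R)%R.
Proof.
move=> -> i j; rewrite !mxE summxE; congr (_ * _)%R.
by apply: eq_bigr => G _; rewrite !mxE.
Qed.

Lemma finite_pts (R : realType) d n N K (F : 'I_d -> {set {set 'I_n}}) :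
  finite_set [set z : 'rV[int]_d |
     in_dilated_polytope N K F (map_mx (fun a : int => a%:~R : R) z)].
Proof.
pose M := #|{: {set 'I_N} * {set {set 'I_N}}}|.
pose Bd := (K * M)%N.
apply: (sub_finite_set _ (finite_image
  (fun w : 'rV['I_Bd.+1]_d => map_mx (fun j : 'I_Bd.+1 => ((j : nat) : int)) w)
  (@finite_finset _ setT))).
move=> z /= [lam [l0 lnon l1 xE]].
have hx := coord_eq xE.
exists (map_mx (fun a : int => (inord `|a|%N : 'I_Bd.+1)) z) => //.
apply/matrixP => i j; rewrite !mxE.
have h := hx i j; rewrite mxE in h.
have z0 : (0 <= z i j)%R.
  rewrite -(ler0z R) h; apply: mulr_ge0; first by rewrite ler0n.
  by apply: sumr_ge0 => G _; apply: mulr_ge0; rewrite ?ler0n.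
have zB : (z i j <= Bd%:Z)%R.
  rewrite -(ler_int R) h; change ((Bd%:Z)%:~R : R) with (Bd%:R : R).
  rewrite /Bd natrM; apply: ler_wpM2l; first by rewrite ler0n.
  apply: (@le_trans _ _ (\sum_G lam G * M%:R))%R.
    apply: ler_sum => G _; apply: ler_wpM2l => //; rewrite ler_nat.
    exact: max_card.
  by rewrite -mulr_suml l1 mul1r.
rewrite inordK; first by rewrite gez0_abs.
by rewrite ltnS -lez_nat gez0_abs.
Qed.

Lemma contain (R : realType) d n n' n'' (F : 'I_d -> {set {set 'I_n}})
  (HF : forall i, simple_graph (F i)) (Hn' : (n <= n')%N) (Hn'' : (n' <= n'')%N)
  k (x : 'rV[R]_d) :
  in_dilated_polytope n'' ('C(n', n) * k) F x ->
  in_dilated_polytope n' ('C(n'', n) * k) F x.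
Proof.
move=> [lam [l0 lnon l1 xE]].
have /choice [HS HSP] := fun G => key Hn' Hn'' G.
pose c : R := ('C(n'', n'))%:R.
have c0 : c != 0 by rewrite pnatr_eq0 -lt0n bin_gt0.
pose mu := fun H : {set {set 'I_n'}} => c^-1 * \sum_G lam G *
   \sum_(S : {set 'I_n''} | #|S| == n') (if H == HS G S then 1 else 0).
have muE : forall g : {set {set 'I_n'}} -> R,
   \sum_H mu H * g H = c^-1 * \sum_G lam G * \sum_(S : {set 'I_n''} | #|S| == n') g (HS G S).
  move=> g; rewrite /mu.
  under eq_bigr do rewrite -mulrA mulr_suml.
  rewrite -mulr_sumr; congr (_ * _).
  rewrite exchange_big /=; apply: eq_bigr => G _.
  under eq_bigr do rewrite -mulrA.
  rewrite -mulr_sumr; congr (_ * _).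
  transitivity (\sum_H \sum_(S : {set 'I_n''} | #|S| == n') (if H == HS G S then 1 else 0) * g H).
    by apply: eq_bigr => H _; rewrite mulr_suml.
  rewrite exchange_big /=; apply: eq_bigr => S _.
  under eq_bigr => H _ do rewrite (fun_if (fun t => t * g H)) mul1r mul0r.
  by rewrite -big_mkcond big_pred1_eq.
have cnt : \sum_(S : {set 'I_n''} | #|S| == n') (1 : R) = c.
  rewrite sumr_const /c; have := card_draws 'I_n'' n'; rewrite card_ord => <-; congr (_ *+ _).
  by apply: eq_card => S; rewrite inE.
exists mu; split.
- move=> H; rewrite /mu; apply: mulr_ge0; first by rewrite invr_ge0 ler0n.
  apply: sumr_ge0 => G _; apply: mulr_ge0 => //.
  by apply: sumr_ge0 => S _; case: (_ == _).
- move=> H Hns; rewrite /mu big1 ?mulr0 // => G _.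
  rewrite big1 ?mulr0 // => S _; case: eqP => // E.
  by case: (HSP G) => /(_ S); rewrite -E (negbTE Hns).
- have := muE (fun _ => 1); under eq_bigr do rewrite mulr1.
  move=> ->; under eq_bigr do rewrite cnt.
  by rewrite -mulr_suml l1 mul1r mulVf.
apply/matrixP => i j; rewrite (coord_eq xE) !mxE summxE.
under [in RHS]eq_bigr do rewrite !mxE.
rewrite (muE (fun H => (tL (F j) H)%:R)).
under [in RHS]eq_bigr do rewrite -natr_sum (proj2 (HSP _)) // natrM mulrCA.
rewrite -mulr_sumr.
have bi := binid Hn' Hn''.
set Sm := \sum_G _.
have bi' : c * ('C(n', n))%:R = ('C(n'', n))%:R * ('C(n'' - n, n' - n))%:R.
  by rewrite /c -!natrM bi.
rewrite !natrM; apply: (mulfI c0).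
transitivity ((c * ('C(n', n))%:R) * k%:R * Sm); first by ring.
rewrite bi'; field; exact: c0.
Qed.

Local Close Scope ring_scope.

Theorem proposition2p8 (R : realType) (d n n' n'' : nat)
    (F : 'I_d -> {set {set 'I_n}})
    (HF : forall i, simple_graph (F i))
    (Hn' : (n <= n')%N) (Hn'' : (n' <= n'')%N)
    (k : nat) (Hk : (0 < k)%N) :
  (ehrhart R n'' F ('C(n', n) * k) <= ehrhart R n' F ('C(n'', n) * k))%N.
Proof.
rewrite /ehrhart; apply: fsubset_leq_card.
have fA := finite_pts R n'' ('C(n', n) * k) F.
have fB := finite_pts R n' ('C(n'', n) * k) F.
rewrite -fset_set_sub //.
by move=> z /= Hz; exact: (contain HF Hn' Hn'' Hz).
Qed.
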